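(* Let $(A_1,\cdot_1,\circ_1)$ and $(A_2,\cdot_2,\circ_2)$ be two anti-pre-Lie Poisson algebras. Define bilinear operations $\cdot$ and $\circ$ on $A_1\otimes A_2$ by $$(x_1\otimes x_2)\cdot(y_1\otimes y_2)=x_1\cdot_1 y_1\otimes x_2\cdot_2 y_2,$$ $$(x_1\otimes x_2)\circ(y_1\otimes y_2)=x_1\circ_1 y_1\otimes x_2\cdot_2 y_2+x_1\cdot_1 y_1\otimes x_2\circ_2 y_2,$$ for all $x_1,y_1\in A_1$, $x_2,y_2\in A_2$. Then $(A_1\otimes A_2,\cdot,\circ)$ is an anti-pre-Lie Poisson algebra.
   Context: All vector spaces are finite-dimensional over a field $\mathbb F$ of characteristic $0$. An anti-pre-Lie algebra is a vector space $A$ with a bilinear operation $\circ$ such that, writing $[x,y]=x\circ y-y\circ x$, for all $x,y,z\in A$: (i) $x\circ(y\circ z)-y\circ(x\circ z)=[y,x]\circ z$, and (ii) $[x,y]\circ z+[y,z]\circ x+[z,x]\circ y=0$. An anti-pre-Lie Poisson algebra is a triple $(A,\cdot,\circ)$ where $(A,\cdot)$ is a commutative associative algebra, $(A,\circ)$ is an anti-pre-Lie algebra, and for all $x,y,z\in A$: $2(x\circ y)\cdot z-2(y\circ x)\cdot z=y\cdot(x\circ z)-x\cdot(y\circ z)$ and $2x\circ(y\cdot z)=(z\cdot x)\circ y+z\cdot(x\circ y)$. *)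

(* Defs.v *)
From HB Require Import structures.
From mathcomp Require Import all_boot all_order all_algebra.
Set Implicit Arguments. Unset Strict Implicit. Unset Printing Implicit Defensive.
Import GRing.Theory.
Local Open Scope ring_scope.

Section Defs.
Variable F : fieldType.

Definition bilinear_op (V : lmodType F) (op : V -> V -> V) : Prop :=
  (forall (a : F) (x y z : V), op (a *: x + y) z = a *: op x z + op y z) /\
  (forall (a : F) (x y z : V), op x (a *: y + z) = a *: op x y + op x z).

Definition comm_assoc_algebra (V : lmodType F) (mul : V -> V -> V) : Prop :=
  bilinear_op mul /\
  (forall x y, mul x y = mul y x) /\
  (forall x y z, mul x (mul y z) = mul (mul x y) z).

Definition commut (V : lmodType F) (circ : V -> V -> V) (x y : V) : V :=
  circ x y - circ y x.

Definition anti_pre_Lie (V : lmodType F) (circ : V -> V -> V) : Prop :=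
  bilinear_op circ /\
  (forall x y z, circ x (circ y z) - circ y (circ x z) = circ (commut circ y x) z) /\
  (forall x y z, circ (commut circ x y) z + circ (commut circ y z) x
                 + circ (commut circ z x) y = 0).

Definition anti_pre_Lie_Poisson (V : lmodType F)
  (dot circ : V -> V -> V) : Prop :=
  comm_assoc_algebra dot /\ anti_pre_Lie circ /\
  (forall x y z, 2%:R *: dot (circ x y) z - 2%:R *: dot (circ y x) z
                 = dot y (circ x z) - dot x (circ y z)) /\
  (forall x y z, 2%:R *: circ x (dot y z) = circ (dot z x) y + dot z (circ x y)).

(** Concrete model: a finite-dimensional F-vector space of dimension n is
    'rV[F]_n, with standard basis e_i = delta_mx 0 i.  The tensor product
    F^n (x) F^m is modeled as 'M[F]_(n, m), with x (x) y := x^T *m y. *)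
Definition tens n m (x : 'rV[F]_n) (y : 'rV[F]_m) : 'M[F]_(n, m) := x^T *m y.

Definition basis_vec n (i : 'I_n) : 'rV[F]_n := delta_mx 0 i.

(** The unique bilinear operation on A1 (x) A2 with
    (x1 (x) x2) * (y1 (x) y2) = op1 x1 y1 (x) op2 x2 y2
    (for bilinear op1, op2), obtained by extending from basis tensors. *)
Definition tensor_op n m (op1 : 'rV[F]_n -> 'rV[F]_n -> 'rV[F]_n)
  (op2 : 'rV[F]_m -> 'rV[F]_m -> 'rV[F]_m) (T S : 'M[F]_(n, m)) : 'M[F]_(n, m) :=
  \sum_(i < n) \sum_(k < m) \sum_(j < n) \sum_(l < m)
     (T i k * S j l) *: tens (op1 (basis_vec i) (basis_vec j))
                             (op2 (basis_vec k) (basis_vec l)).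

Definition tensor_dot n m (dot1 : 'rV[F]_n -> 'rV[F]_n -> 'rV[F]_n)
  (dot2 : 'rV[F]_m -> 'rV[F]_m -> 'rV[F]_m) : 'M[F]_(n, m) -> 'M[F]_(n, m) -> 'M[F]_(n, m) :=
  tensor_op dot1 dot2.

Definition tensor_circ n m (dot1 circ1 : 'rV[F]_n -> 'rV[F]_n -> 'rV[F]_n)
  (dot2 circ2 : 'rV[F]_m -> 'rV[F]_m -> 'rV[F]_m) (T S : 'M[F]_(n, m)) : 'M[F]_(n, m) :=
  tensor_op circ1 dot2 T S + tensor_op dot1 circ2 T S.

End Defs.

(* Main.v *)
Require Import Defs.
From HB Require Import structures.
From mathcomp Require Import all_boot all_order all_algebra.
From mathcomp Require Import ring.
Import GRing.Theory.
Local Open Scope ring_scope.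
Set Implicit Arguments. Unset Strict Implicit. Unset Printing Implicit Defensive.

Definition lhs_of (T : zmodType) (a : T) (h : a = 0) : T := a.
Lemma lhs_ofE (T : zmodType) (a : T) (h : a = 0) : lhs_of h = 0.
Proof. exact: h. Qed.

Section Bilin.
Variable F : fieldType.
Variable V : lmodType F.
Variable op : V -> V -> V.
Hypothesis hop : bilinear_op op.

Lemma op0l z : op 0 z = 0.
Proof.
have h := hop.1 1 0 0 z; rewrite scaler0 addr0 scale1r in h.
by apply: (addrI (op 0 z)); rewrite addr0 -h.
Qed.
Lemma op0r z : op z 0 = 0.
Proof.
have h := hop.2 1 z 0 0; rewrite scaler0 addr0 scale1r in h.
by apply: (addrI (op z 0)); rewrite addr0 -h.
Qed.
Lemma opZl a x z : op (a *: x) z = a *: op x z.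
Proof. by have := hop.1 a x 0 z; rewrite addr0 op0l addr0. Qed.
Lemma opZr a x z : op z (a *: x) = a *: op z x.
Proof. by have := hop.2 a z x 0; rewrite addr0 op0r addr0. Qed.
Lemma opDl x y z : op (x + y) z = op x z + op y z.
Proof. by have := hop.1 1 x y z; rewrite !scale1r. Qed.
Lemma opDr x y z : op z (x + y) = op z x + op z y.
Proof. by have := hop.2 1 z x y; rewrite !scale1r. Qed.
Lemma opBl x y z : op (x - y) z = op x z - op y z.
Proof. by rewrite opDl -scaleN1r opZl scaleN1r. Qed.
Lemma opBr x y z : op z (x - y) = op z x - op z y.
Proof. by rewrite opDr -scaleN1r opZr scaleN1r. Qed.
Lemma op_suml I (r : seq I) (P : pred I) (f : I -> V) z :
  op (\sum_(i <- r | P i) f i) z = \sum_(i <- r | P i) op (f i) z.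
Proof. exact: (big_morph (fun x => op x z) (fun x y => opDl x y z) (op0l z)). Qed.
Lemma op_sumr I (r : seq I) (P : pred I) (f : I -> V) z :
  op z (\sum_(i <- r | P i) f i) = \sum_(i <- r | P i) op z (f i).
Proof. exact: (big_morph (fun x => op z x) (fun x y => opDr x y z) (op0r z)). Qed.
End Bilin.

Ltac mxring := apply/rowP => i; rewrite !mxE; ring.

Section APLP.
Variable F : fieldType.
Hypothesis HF : [pchar F] =i pred0.
Variable n : nat.
Local Notation V := 'rV[F]_n.
Variables d c : V -> V -> V.
Hypothesis H : anti_pre_Lie_Poisson d c.

Lemma natr_nz k : (k.+1%:R : F) != 0.
Proof. by rewrite ((pcharf0P F).1 HF). Qed.

Ltac split_nz := try done; repeat (apply/andP; split); try done; apply: natr_nz.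

Let hd := H.1.1.
Let hc := H.2.1.1.
Let dcomm := H.1.2.1.
Let dassoc := H.1.2.2.
Let apl1 := H.2.1.2.1.
Let apl2 := H.2.1.2.2.
Let ax1 := H.2.2.1.
Let ax2 := H.2.2.2.

Lemma r_commR (o : V -> V -> V) u v w : o u (d v w) - o u (d w v) = 0.
Proof. by rewrite (dcomm v w) subrr. Qed.
Lemma r_commL (o : V -> V -> V) u v w : o (d u v) w - o (d v u) w = 0.
Proof. by rewrite (dcomm u v) subrr. Qed.
Lemma r_commT (o : V -> V -> V) u v w : d u (o v w) - d (o v w) u = 0.
Proof. by rewrite (dcomm u (o v w)) subrr. Qed.
Lemma r_assoc u v w : d u (d v w) - d (d u v) w = 0.
Proof. by rewrite dassoc subrr. Qed.
Lemma r_apl1 u v w : c u (c v w) - c v (c u w) - c (c v u) w + c (c u v) w = 0.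
Proof. rewrite apl1 /commut (opBl hc). mxring. Qed.
Lemma r_apl2 u v w : (c (c u v) w - c (c v u) w) + (c (c v w) u - c (c w v) u)
   + (c (c w u) v - c (c u w) v) = 0.
Proof. by have := apl2 u v w; rewrite /commut !(opBl hc). Qed.
Lemma r_p1 u v w : 2%:R *: d (c u v) w - 2%:R *: d (c v u) w - d v (c u w) + d u (c v w) = 0.
Proof. rewrite ax1. mxring. Qed.
Lemma r_p2 u v w : 2%:R *: c u (d v w) - c (d w u) v - d w (c u v) = 0.
Proof. rewrite ax2. mxring. Qed.

Lemma nf0 x y z : d x (d y z) = (1%:R) *: (d (d z y) x).
Proof.
apply/eqP; rewrite -subr_eq0; apply/eqP.
transitivity ((1%:R) *: (lhs_of (r_commR d x y z)) + (1%:R) *: (lhs_of (r_commT d x z y))).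
  by rewrite /lhs_of; apply/rowP => i; rewrite !mxE; field; split_nz.
by rewrite !lhs_ofE !scaler0 ?addr0.
Qed.

Lemma nf1 x y z : d (d x y) z = (1%:R) *: (d (d z y) x).
Proof.
apply/eqP; rewrite -subr_eq0; apply/eqP.
transitivity ((1%:R) *: (lhs_of (r_commR d x y z)) + (-1%:R) *: (lhs_of (r_assoc x y z)) + (1%:R) *: (lhs_of (r_commT d x z y))).
  by rewrite /lhs_of; apply/rowP => i; rewrite !mxE; field; split_nz.
by rewrite !lhs_ofE !scaler0 ?addr0.
Qed.

Lemma nf2 x y z : d x (c y z) = ((1%:R / 2%:R)) *: (d z (c y x)) + (1%:R) *: (d (c z y) x) + (-1%:R) *: (c z (d y x)) + ((1%:R / 2%:R)) *: (c (d z y) x).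
Proof.
apply/eqP; rewrite -subr_eq0; apply/eqP.
transitivity ((1%:R) *: (lhs_of (r_commT c x y z)) + ((1%:R / 2%:R)) *: (lhs_of (r_commL c y z x)) + ((1%:R / 2%:R)) *: (lhs_of (r_p1 y z x)) + (-1%:R) *: (lhs_of (r_commR c z x y)) + ((1%:R / 2%:R)) *: (lhs_of (r_p2 z x y))).
  by rewrite /lhs_of; apply/rowP => i; rewrite !mxE; field; split_nz.
by rewrite !lhs_ofE !scaler0 ?addr0.
Qed.

Lemma nf3 x y z : d (c x y) z = (1%:R) *: (d z (c y x)) + (-1%:R) *: (d (c z y) x) + (2%:R) *: (c z (d y x)) + (-1%:R) *: (c (d z y) x).
Proof.
apply/eqP; rewrite -subr_eq0; apply/eqP.
transitivity ((-(2%:R / 3%:R)) *: (lhs_of (r_commT c x y z)) + ((2%:R / 3%:R)) *: (lhs_of (r_p1 x y z)) + (-(1%:R / 3%:R)) *: (lhs_of (r_commT c x z y)) + ((1%:R / 3%:R)) *: (lhs_of (r_p1 x z y)) + ((2%:R / 3%:R)) *: (lhs_of (r_commT c y x z)) + (-1%:R) *: (lhs_of (r_commL c y z x)) + (-(2%:R / 3%:R)) *: (lhs_of (r_commT c y z x)) + (-(1%:R / 3%:R)) *: (lhs_of (r_p1 y z x)) + (2%:R) *: (lhs_of (r_commR c z x y)) + ((1%:R / 3%:R)) *: (lhs_of (r_commT c z x y)) + (-1%:R) *: (lhs_of (r_p2 z x y)) + (-(4%:R / 3%:R)) *: (lhs_of (r_commT c z y x))).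
  by rewrite /lhs_of; apply/rowP => i; rewrite !mxE; field; split_nz.
by rewrite !lhs_ofE !scaler0 ?addr0.
Qed.

Lemma nf4 x y z : c x (d y z) = ((1%:R / 2%:R)) *: (d z (c y x)) + (-1%:R) *: (d (c z y) x) + (2%:R) *: (c z (d y x)) + (-(1%:R / 2%:R)) *: (c (d z y) x).
Proof.
apply/eqP; rewrite -subr_eq0; apply/eqP.
transitivity ((1%:R) *: (lhs_of (r_commR c x y z)) + (-(1%:R / 2%:R)) *: (lhs_of (r_commL c x y z)) + (-(2%:R / 3%:R)) *: (lhs_of (r_commT c x y z)) + ((1%:R / 6%:R)) *: (lhs_of (r_p1 x y z)) + (-(1%:R / 3%:R)) *: (lhs_of (r_commT c x z y)) + ((1%:R / 3%:R)) *: (lhs_of (r_p1 x z y)) + ((1%:R / 2%:R)) *: (lhs_of (r_p2 x z y)) + (-1%:R) *: (lhs_of (r_commR c y x z)) + ((2%:R / 3%:R)) *: (lhs_of (r_commT c y x z)) + ((1%:R / 2%:R)) *: (lhs_of (r_p2 y x z)) + (-1%:R) *: (lhs_of (r_commL c y z x)) + (-(2%:R / 3%:R)) *: (lhs_of (r_commT c y z x)) + (-(1%:R / 3%:R)) *: (lhs_of (r_p1 y z x)) + (-(1%:R / 2%:R)) *: (lhs_of (r_p2 y z x)) + (2%:R) *: (lhs_of (r_commR c z x y)) + ((1%:R / 3%:R)) *: (lhs_of (r_commT c z x y)) + (-1%:R) *: (lhs_of (r_p2 z x y)) + (-(1%:R / 3%:R)) *: (lhs_of (r_commT c z y x))).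
  by rewrite /lhs_of; apply/rowP => i; rewrite !mxE; field; split_nz.
by rewrite !lhs_ofE !scaler0 ?addr0.
Qed.

Lemma nf5 x y z : c (d x y) z = ((1%:R / 2%:R)) *: (d z (c y x)) + (-1%:R) *: (d (c z y) x) + (1%:R) *: (c z (d y x)) + ((1%:R / 2%:R)) *: (c (d z y) x).
Proof.
apply/eqP; rewrite -subr_eq0; apply/eqP.
transitivity ((-1%:R) *: (lhs_of (r_commT c x y z)) + (-2%:R) *: (lhs_of (r_commR c y x z)) + (1%:R) *: (lhs_of (r_p2 y x z)) + (-(1%:R / 2%:R)) *: (lhs_of (r_commL c y z x)) + (-(1%:R / 2%:R)) *: (lhs_of (r_p1 y z x)) + (-1%:R) *: (lhs_of (r_p2 y z x)) + (1%:R) *: (lhs_of (r_commR c z x y)) + (-(1%:R / 2%:R)) *: (lhs_of (r_p2 z x y))).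
  by rewrite /lhs_of; apply/rowP => i; rewrite !mxE; field; split_nz.
by rewrite !lhs_ofE !scaler0 ?addr0.
Qed.

Lemma nf6 x y z : c x (c y z) = (-1%:R) *: (c (c x z) y) + (1%:R) *: (c y (c x z)) + (1%:R) *: (c (c y z) x) + (1%:R) *: (c (c z x) y) + (-1%:R) *: (c (c z y) x).
Proof.
apply/eqP; rewrite -subr_eq0; apply/eqP.
transitivity ((1%:R) *: (lhs_of (r_apl1 x y z)) + (-1%:R) *: (lhs_of (r_apl2 x y z))).
  by rewrite /lhs_of; apply/rowP => i; rewrite !mxE; field; split_nz.
by rewrite !lhs_ofE !scaler0 ?addr0.
Qed.

Lemma nf7 x y z : c (c x y) z = (1%:R) *: (c (c x z) y) + (1%:R) *: (c (c y x) z) + (-1%:R) *: (c (c y z) x) + (-1%:R) *: (c (c z x) y) + (1%:R) *: (c (c z y) x).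
Proof.
apply/eqP; rewrite -subr_eq0; apply/eqP.
transitivity ((1%:R) *: (lhs_of (r_apl2 x y z))).
  by rewrite /lhs_of; apply/rowP => i; rewrite !mxE; field; split_nz.
by rewrite !lhs_ofE !scaler0 ?addr0.
Qed.

Lemma nf8 x y z : d x (d z y) = (1%:R) *: (d (d z y) x).
Proof.
apply/eqP; rewrite -subr_eq0; apply/eqP.
transitivity ((1%:R) *: (lhs_of (r_commT d x z y))).
  by rewrite /lhs_of; apply/rowP => i; rewrite !mxE; field; split_nz.
by rewrite !lhs_ofE !scaler0 ?addr0.
Qed.

Lemma nf9 x y z : d (d x z) y = (1%:R) *: (d (d z y) x).
Proof.
apply/eqP; rewrite -subr_eq0; apply/eqP.
transitivity ((1%:R) *: (lhs_of (r_commR d x y z)) + (-1%:R) *: (lhs_of (r_commT d x y z)) + (1%:R) *: (lhs_of (r_commT d x z y)) + (1%:R) *: (lhs_of (r_commR d y x z)) + (-1%:R) *: (lhs_of (r_commT d y x z)) + (1%:R) *: (lhs_of (r_assoc y z x))).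
  by rewrite /lhs_of; apply/rowP => i; rewrite !mxE; field; split_nz.
by rewrite !lhs_ofE !scaler0 ?addr0.
Qed.

Lemma nf10 x y z : d x (c z y) = (1%:R) *: (d (c z y) x).
Proof.
apply/eqP; rewrite -subr_eq0; apply/eqP.
transitivity ((1%:R) *: (lhs_of (r_commT c x z y))).
  by rewrite /lhs_of; apply/rowP => i; rewrite !mxE; field; split_nz.
by rewrite !lhs_ofE !scaler0 ?addr0.
Qed.

Lemma nf11 x y z : d (c x z) y = ((1%:R / 2%:R)) *: (d z (c y x)) + (-1%:R) *: (d (c z y) x) + (3%:R) *: (c z (d y x)) + (-(3%:R / 2%:R)) *: (c (d z y) x).
Proof.
apply/eqP; rewrite -subr_eq0; apply/eqP.
transitivity ((-(1%:R / 3%:R)) *: (lhs_of (r_commT c x y z)) + ((1%:R / 3%:R)) *: (lhs_of (r_p1 x y z)) + (-(2%:R / 3%:R)) *: (lhs_of (r_commT c x z y)) + ((2%:R / 3%:R)) *: (lhs_of (r_p1 x z y)) + ((1%:R / 3%:R)) *: (lhs_of (r_commT c y x z)) + (-(3%:R / 2%:R)) *: (lhs_of (r_commL c y z x)) + (-(4%:R / 3%:R)) *: (lhs_of (r_commT c y z x)) + (-(1%:R / 6%:R)) *: (lhs_of (r_p1 y z x)) + (3%:R) *: (lhs_of (r_commR c z x y)) + ((2%:R / 3%:R)) *: (lhs_of (r_commT c z x y)) + (-(3%:R / 2%:R)) *: (lhs_of (r_p2 z x y)) + (-(2%:R / 3%:R)) *: (lhs_of (r_commT c z y x))).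
  by rewrite /lhs_of; apply/rowP => i; rewrite !mxE; field; split_nz.
by rewrite !lhs_ofE !scaler0 ?addr0.
Qed.

Lemma nf12 x y z : c x (d z y) = ((1%:R / 2%:R)) *: (d z (c y x)) + (-1%:R) *: (d (c z y) x) + (2%:R) *: (c z (d y x)) + (-(1%:R / 2%:R)) *: (c (d z y) x).
Proof.
apply/eqP; rewrite -subr_eq0; apply/eqP.
transitivity ((-(1%:R / 2%:R)) *: (lhs_of (r_commL c x y z)) + (-(2%:R / 3%:R)) *: (lhs_of (r_commT c x y z)) + ((1%:R / 6%:R)) *: (lhs_of (r_p1 x y z)) + (-(1%:R / 3%:R)) *: (lhs_of (r_commT c x z y)) + ((1%:R / 3%:R)) *: (lhs_of (r_p1 x z y)) + ((1%:R / 2%:R)) *: (lhs_of (r_p2 x z y)) + (-1%:R) *: (lhs_of (r_commR c y x z)) + ((2%:R / 3%:R)) *: (lhs_of (r_commT c y x z)) + ((1%:R / 2%:R)) *: (lhs_of (r_p2 y x z)) + (-1%:R) *: (lhs_of (r_commL c y z x)) + (-(2%:R / 3%:R)) *: (lhs_of (r_commT c y z x)) + (-(1%:R / 3%:R)) *: (lhs_of (r_p1 y z x)) + (-(1%:R / 2%:R)) *: (lhs_of (r_p2 y z x)) + (2%:R) *: (lhs_of (r_commR c z x y)) + ((1%:R / 3%:R)) *: (lhs_of (r_commT c z x y)) + (-1%:R) *: (lhs_of (r_p2 z x y)) + (-(1%:R / 3%:R)) *: (lhs_of (r_commT c z y x))).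
  by rewrite /lhs_of; apply/rowP => i; rewrite !mxE; field; split_nz.
by rewrite !lhs_ofE !scaler0 ?addr0.
Qed.

Lemma nf13 x y z : c (d x z) y = (-1%:R) *: (d (c z y) x) + (2%:R) *: (c z (d y x)).
Proof.
apply/eqP; rewrite -subr_eq0; apply/eqP.
transitivity ((2%:R) *: (lhs_of (r_commR c x y z)) + (-1%:R) *: (lhs_of (r_commL c x y z)) + (-(2%:R / 3%:R)) *: (lhs_of (r_commT c x y z)) + (-(1%:R / 3%:R)) *: (lhs_of (r_p1 x y z)) + (-1%:R) *: (lhs_of (r_p2 x y z)) + (1%:R) *: (lhs_of (r_commL c x z y)) + (-(1%:R / 3%:R)) *: (lhs_of (r_commT c x z y)) + ((1%:R / 3%:R)) *: (lhs_of (r_p1 x z y)) + (1%:R) *: (lhs_of (r_p2 x z y)) + (-2%:R) *: (lhs_of (r_commR c y x z)) + ((2%:R / 3%:R)) *: (lhs_of (r_commT c y x z)) + (1%:R) *: (lhs_of (r_p2 y x z)) + (-1%:R) *: (lhs_of (r_commL c y z x)) + (-(2%:R / 3%:R)) *: (lhs_of (r_commT c y z x)) + (-(1%:R / 3%:R)) *: (lhs_of (r_p1 y z x)) + (-1%:R) *: (lhs_of (r_p2 y z x)) + (2%:R) *: (lhs_of (r_commR c z x y)) + (-(2%:R / 3%:R)) *: (lhs_of (r_commT c z x y)) + (-1%:R) *: (lhs_of (r_p2 z x y)) + ((2%:R / 3%:R)) *: (lhs_of (r_commT c z y x))).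
  by rewrite /lhs_of; apply/rowP => i; rewrite !mxE; field; split_nz.
by rewrite !lhs_ofE !scaler0 ?addr0.
Qed.

Lemma nf14 x y z : c x (c z y) = (-1%:R) *: (c (c x z) y) + (1%:R) *: (c z (c x y)) + (1%:R) *: (c (c z x) y).
Proof.
apply/eqP; rewrite -subr_eq0; apply/eqP.
transitivity ((1%:R) *: (lhs_of (r_apl1 x z y))).
  by rewrite /lhs_of; apply/rowP => i; rewrite !mxE; field; split_nz.
by rewrite !lhs_ofE !scaler0 ?addr0.
Qed.

Lemma nf15 x y z : d y (d x z) = (1%:R) *: (d (d z y) x).
Proof.
apply/eqP; rewrite -subr_eq0; apply/eqP.
transitivity ((1%:R) *: (lhs_of (r_commR d x y z)) + (-1%:R) *: (lhs_of (r_commT d x y z)) + (1%:R) *: (lhs_of (r_commT d x z y)) + (1%:R) *: (lhs_of (r_commR d y x z)) + (1%:R) *: (lhs_of (r_assoc y z x))).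
  by rewrite /lhs_of; apply/rowP => i; rewrite !mxE; field; split_nz.
by rewrite !lhs_ofE !scaler0 ?addr0.
Qed.

Lemma nf16 x y z : d (d y x) z = (1%:R) *: (d (d z y) x).
Proof.
apply/eqP; rewrite -subr_eq0; apply/eqP.
transitivity ((1%:R) *: (lhs_of (r_commR d x y z)) + (-1%:R) *: (lhs_of (r_commL d x y z)) + (-1%:R) *: (lhs_of (r_assoc x y z)) + (1%:R) *: (lhs_of (r_commT d x z y))).
  by rewrite /lhs_of; apply/rowP => i; rewrite !mxE; field; split_nz.
by rewrite !lhs_ofE !scaler0 ?addr0.
Qed.

Lemma nf17 x y z : d y (c x z) = ((1%:R / 2%:R)) *: (d z (c y x)) + (-1%:R) *: (d (c z y) x) + (3%:R) *: (c z (d y x)) + (-(3%:R / 2%:R)) *: (c (d z y) x).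
Proof.
apply/eqP; rewrite -subr_eq0; apply/eqP.
transitivity ((-(1%:R / 3%:R)) *: (lhs_of (r_commT c x y z)) + ((1%:R / 3%:R)) *: (lhs_of (r_p1 x y z)) + (-(2%:R / 3%:R)) *: (lhs_of (r_commT c x z y)) + ((2%:R / 3%:R)) *: (lhs_of (r_p1 x z y)) + ((4%:R / 3%:R)) *: (lhs_of (r_commT c y x z)) + (-(3%:R / 2%:R)) *: (lhs_of (r_commL c y z x)) + (-(4%:R / 3%:R)) *: (lhs_of (r_commT c y z x)) + (-(1%:R / 6%:R)) *: (lhs_of (r_p1 y z x)) + (3%:R) *: (lhs_of (r_commR c z x y)) + ((2%:R / 3%:R)) *: (lhs_of (r_commT c z x y)) + (-(3%:R / 2%:R)) *: (lhs_of (r_p2 z x y)) + (-(2%:R / 3%:R)) *: (lhs_of (r_commT c z y x))).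
  by rewrite /lhs_of; apply/rowP => i; rewrite !mxE; field; split_nz.
by rewrite !lhs_ofE !scaler0 ?addr0.
Qed.

Lemma nf18 x y z : d (c y x) z = (1%:R) *: (d z (c y x)).
Proof.
apply/eqP; rewrite -subr_eq0; apply/eqP.
transitivity ((-1%:R) *: (lhs_of (r_commT c z y x))).
  by rewrite /lhs_of; apply/rowP => i; rewrite !mxE; field; split_nz.
by rewrite !lhs_ofE !scaler0 ?addr0.
Qed.

Lemma nf19 x y z : c y (d x z) = ((1%:R / 2%:R)) *: (d z (c y x)) + ((1%:R / 2%:R)) *: (c (d z y) x).
Proof.
apply/eqP; rewrite -subr_eq0; apply/eqP.
transitivity (((1%:R / 2%:R)) *: (lhs_of (r_p2 y x z))).
  by rewrite /lhs_of; apply/rowP => i; rewrite !mxE; field; split_nz.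
by rewrite !lhs_ofE !scaler0 ?addr0.
Qed.

Lemma nf20 x y z : c (d y x) z = ((1%:R / 2%:R)) *: (d z (c y x)) + (-1%:R) *: (d (c z y) x) + (1%:R) *: (c z (d y x)) + ((1%:R / 2%:R)) *: (c (d z y) x).
Proof.
apply/eqP; rewrite -subr_eq0; apply/eqP.
transitivity ((-1%:R) *: (lhs_of (r_commL c x y z)) + (-1%:R) *: (lhs_of (r_commT c x y z)) + (-2%:R) *: (lhs_of (r_commR c y x z)) + (1%:R) *: (lhs_of (r_p2 y x z)) + (-(1%:R / 2%:R)) *: (lhs_of (r_commL c y z x)) + (-(1%:R / 2%:R)) *: (lhs_of (r_p1 y z x)) + (-1%:R) *: (lhs_of (r_p2 y z x)) + (1%:R) *: (lhs_of (r_commR c z x y)) + (-(1%:R / 2%:R)) *: (lhs_of (r_p2 z x y))).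
  by rewrite /lhs_of; apply/rowP => i; rewrite !mxE; field; split_nz.
by rewrite !lhs_ofE !scaler0 ?addr0.
Qed.

Lemma nf21 x y z : d y (d z x) = (1%:R) *: (d (d z y) x).
Proof.
apply/eqP; rewrite -subr_eq0; apply/eqP.
transitivity ((1%:R) *: (lhs_of (r_commR d x y z)) + (-1%:R) *: (lhs_of (r_commT d x y z)) + (1%:R) *: (lhs_of (r_commT d x z y)) + (1%:R) *: (lhs_of (r_assoc y z x))).
  by rewrite /lhs_of; apply/rowP => i; rewrite !mxE; field; split_nz.
by rewrite !lhs_ofE !scaler0 ?addr0.
Qed.

Lemma nf22 x y z : d (d y z) x = (1%:R) *: (d (d z y) x).
Proof.
apply/eqP; rewrite -subr_eq0; apply/eqP.
transitivity ((1%:R) *: (lhs_of (r_commR d x y z)) + (-1%:R) *: (lhs_of (r_commT d x y z)) + (1%:R) *: (lhs_of (r_commT d x z y))).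
  by rewrite /lhs_of; apply/rowP => i; rewrite !mxE; field; split_nz.
by rewrite !lhs_ofE !scaler0 ?addr0.
Qed.

Lemma nf23 x y z : d y (c z x) = (2%:R) *: (c z (d y x)) + (-1%:R) *: (c (d z y) x).
Proof.
apply/eqP; rewrite -subr_eq0; apply/eqP.
transitivity ((-1%:R) *: (lhs_of (r_commL c y z x)) + (2%:R) *: (lhs_of (r_commR c z x y)) + (-1%:R) *: (lhs_of (r_p2 z x y))).
  by rewrite /lhs_of; apply/rowP => i; rewrite !mxE; field; split_nz.
by rewrite !lhs_ofE !scaler0 ?addr0.
Qed.

Lemma nf24 x y z : d (c y z) x = ((1%:R / 2%:R)) *: (d z (c y x)) + (1%:R) *: (d (c z y) x) + (-1%:R) *: (c z (d y x)) + ((1%:R / 2%:R)) *: (c (d z y) x).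
Proof.
apply/eqP; rewrite -subr_eq0; apply/eqP.
transitivity (((1%:R / 2%:R)) *: (lhs_of (r_commL c y z x)) + ((1%:R / 2%:R)) *: (lhs_of (r_p1 y z x)) + (-1%:R) *: (lhs_of (r_commR c z x y)) + ((1%:R / 2%:R)) *: (lhs_of (r_p2 z x y))).
  by rewrite /lhs_of; apply/rowP => i; rewrite !mxE; field; split_nz.
by rewrite !lhs_ofE !scaler0 ?addr0.
Qed.

Lemma nf25 x y z : c y (d z x) = ((1%:R / 2%:R)) *: (d z (c y x)) + ((1%:R / 2%:R)) *: (c (d z y) x).
Proof.
apply/eqP; rewrite -subr_eq0; apply/eqP.
transitivity ((-1%:R) *: (lhs_of (r_commR c y x z)) + ((1%:R / 2%:R)) *: (lhs_of (r_p2 y x z))).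
  by rewrite /lhs_of; apply/rowP => i; rewrite !mxE; field; split_nz.
by rewrite !lhs_ofE !scaler0 ?addr0.
Qed.

Lemma nf26 x y z : c (d y z) x = (1%:R) *: (c (d z y) x).
Proof.
apply/eqP; rewrite -subr_eq0; apply/eqP.
transitivity ((1%:R) *: (lhs_of (r_commL c y z x))).
  by rewrite /lhs_of; apply/rowP => i; rewrite !mxE; field; split_nz.
by rewrite !lhs_ofE !scaler0 ?addr0.
Qed.

Lemma nf27 x y z : c y (c z x) = (-1%:R) *: (c (c y z) x) + (1%:R) *: (c z (c y x)) + (1%:R) *: (c (c z y) x).
Proof.
apply/eqP; rewrite -subr_eq0; apply/eqP.
transitivity ((1%:R) *: (lhs_of (r_apl1 y z x))).
  by rewrite /lhs_of; apply/rowP => i; rewrite !mxE; field; split_nz.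
by rewrite !lhs_ofE !scaler0 ?addr0.
Qed.

Lemma nf28 x y z : d z (d x y) = (1%:R) *: (d (d z y) x).
Proof.
apply/eqP; rewrite -subr_eq0; apply/eqP.
transitivity ((1%:R) *: (lhs_of (r_commR d x y z)) + (-1%:R) *: (lhs_of (r_assoc x y z)) + (1%:R) *: (lhs_of (r_commT d x z y)) + (1%:R) *: (lhs_of (r_commT d z x y))).
  by rewrite /lhs_of; apply/rowP => i; rewrite !mxE; field; split_nz.
by rewrite !lhs_ofE !scaler0 ?addr0.
Qed.

Lemma nf29 x y z : d (d z x) y = (1%:R) *: (d (d z y) x).
Proof.
apply/eqP; rewrite -subr_eq0; apply/eqP.
transitivity ((1%:R) *: (lhs_of (r_commR d x y z)) + (-1%:R) *: (lhs_of (r_commT d x y z)) + (-1%:R) *: (lhs_of (r_commL d x z y)) + (1%:R) *: (lhs_of (r_commT d x z y)) + (1%:R) *: (lhs_of (r_commR d y x z)) + (-1%:R) *: (lhs_of (r_commT d y x z)) + (1%:R) *: (lhs_of (r_assoc y z x))).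
  by rewrite /lhs_of; apply/rowP => i; rewrite !mxE; field; split_nz.
by rewrite !lhs_ofE !scaler0 ?addr0.
Qed.

Lemma nf30 x y z : d z (c x y) = (1%:R) *: (d z (c y x)) + (-1%:R) *: (d (c z y) x) + (2%:R) *: (c z (d y x)) + (-1%:R) *: (c (d z y) x).
Proof.
apply/eqP; rewrite -subr_eq0; apply/eqP.
transitivity ((-(2%:R / 3%:R)) *: (lhs_of (r_commT c x y z)) + ((2%:R / 3%:R)) *: (lhs_of (r_p1 x y z)) + (-(1%:R / 3%:R)) *: (lhs_of (r_commT c x z y)) + ((1%:R / 3%:R)) *: (lhs_of (r_p1 x z y)) + ((2%:R / 3%:R)) *: (lhs_of (r_commT c y x z)) + (-1%:R) *: (lhs_of (r_commL c y z x)) + (-(2%:R / 3%:R)) *: (lhs_of (r_commT c y z x)) + (-(1%:R / 3%:R)) *: (lhs_of (r_p1 y z x)) + (2%:R) *: (lhs_of (r_commR c z x y)) + ((4%:R / 3%:R)) *: (lhs_of (r_commT c z x y)) + (-1%:R) *: (lhs_of (r_p2 z x y)) + (-(4%:R / 3%:R)) *: (lhs_of (r_commT c z y x))).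
  by rewrite /lhs_of; apply/rowP => i; rewrite !mxE; field; split_nz.
by rewrite !lhs_ofE !scaler0 ?addr0.
Qed.

Lemma nf31 x y z : d (c z x) y = (2%:R) *: (c z (d y x)) + (-1%:R) *: (c (d z y) x).
Proof.
apply/eqP; rewrite -subr_eq0; apply/eqP.
transitivity ((-1%:R) *: (lhs_of (r_commL c y z x)) + (-1%:R) *: (lhs_of (r_commT c y z x)) + (2%:R) *: (lhs_of (r_commR c z x y)) + (-1%:R) *: (lhs_of (r_p2 z x y))).
  by rewrite /lhs_of; apply/rowP => i; rewrite !mxE; field; split_nz.
by rewrite !lhs_ofE !scaler0 ?addr0.
Qed.

Lemma nf32 x y z : c z (d x y) = (1%:R) *: (c z (d y x)).
Proof.
apply/eqP; rewrite -subr_eq0; apply/eqP.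
transitivity ((1%:R) *: (lhs_of (r_commR c z x y))).
  by rewrite /lhs_of; apply/rowP => i; rewrite !mxE; field; split_nz.
by rewrite !lhs_ofE !scaler0 ?addr0.
Qed.

Lemma nf33 x y z : c (d z x) y = (-1%:R) *: (d (c z y) x) + (2%:R) *: (c z (d y x)).
Proof.
apply/eqP; rewrite -subr_eq0; apply/eqP.
transitivity ((2%:R) *: (lhs_of (r_commR c x y z)) + (-1%:R) *: (lhs_of (r_commL c x y z)) + (-(2%:R / 3%:R)) *: (lhs_of (r_commT c x y z)) + (-(1%:R / 3%:R)) *: (lhs_of (r_p1 x y z)) + (-1%:R) *: (lhs_of (r_p2 x y z)) + (-(1%:R / 3%:R)) *: (lhs_of (r_commT c x z y)) + ((1%:R / 3%:R)) *: (lhs_of (r_p1 x z y)) + (1%:R) *: (lhs_of (r_p2 x z y)) + (-2%:R) *: (lhs_of (r_commR c y x z)) + ((2%:R / 3%:R)) *: (lhs_of (r_commT c y x z)) + (1%:R) *: (lhs_of (r_p2 y x z)) + (-1%:R) *: (lhs_of (r_commL c y z x)) + (-(2%:R / 3%:R)) *: (lhs_of (r_commT c y z x)) + (-(1%:R / 3%:R)) *: (lhs_of (r_p1 y z x)) + (-1%:R) *: (lhs_of (r_p2 y z x)) + (2%:R) *: (lhs_of (r_commR c z x y)) + (-(2%:R / 3%:R)) *: (lhs_of (r_commT c z x y)) + (-1%:R) *: (lhs_of (r_p2 z x y)) + ((2%:R / 3%:R)) *: (lhs_of (r_commT c z y x))).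
  by rewrite /lhs_of; apply/rowP => i; rewrite !mxE; field; split_nz.
by rewrite !lhs_ofE !scaler0 ?addr0.
Qed.

Lemma nf34 x y z : d z (d y x) = (1%:R) *: (d (d z y) x).
Proof.
apply/eqP; rewrite -subr_eq0; apply/eqP.
transitivity ((1%:R) *: (lhs_of (r_commR d x y z)) + (-1%:R) *: (lhs_of (r_assoc x y z)) + (1%:R) *: (lhs_of (r_commT d x z y)) + (-1%:R) *: (lhs_of (r_commR d z x y)) + (1%:R) *: (lhs_of (r_commT d z x y))).
  by rewrite /lhs_of; apply/rowP => i; rewrite !mxE; field; split_nz.
by rewrite !lhs_ofE !scaler0 ?addr0.
Qed.
Lemma nf_all x y z : (d x (d y z) = (1%:R) *: (d (d z y) x)) /\ (d (d x y) z = (1%:R) *: (d (d z y) x)) /\ (d x (c y z) = ((1%:R / 2%:R)) *: (d z (c y x)) + (1%:R) *: (d (c z y) x) + (-1%:R) *: (c z (d y x)) + ((1%:R / 2%:R)) *: (c (d z y) x)) /\ (d (c x y) z = (1%:R) *: (d z (c y x)) + (-1%:R) *: (d (c z y) x) + (2%:R) *: (c z (d y x)) + (-1%:R) *: (c (d z y) x)) /\ (c x (d y z) = ((1%:R / 2%:R)) *: (d z (c y x)) + (-1%:R) *: (d (c z y) x) + (2%:R) *: (c z (d y x)) + (-(1%:R / 2%:R)) *: (c (d z y) x)) /\ (c (d x y) z = ((1%:R / 2%:R)) *: (d z (c y x)) + (-1%:R) *: (d (c z y) x) + (1%:R) *: (c z (d y x)) + ((1%:R / 2%:R)) *: (c (d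 z y) x)) /\ (c x (c y z) = (-1%:R) *: (c (c x z) y) + (1%:R) *: (c y (c x z)) + (1%:R) *: (c (c y z) x) + (1%:R) *: (c (c z x) y) + (-1%:R) *: (c (c z y) x)) /\ (c (c x y) z = (1%:R) *: (c (c x z) y) + (1%:R) *: (c (c y x) z) + (-1%:R) *: (c (c y z) x) + (-1%:R) *: (c (c z x) y) + (1%:R) *: (c (c z y) x)) /\ (d x (d z y) = (1%:R) *: (d (d z y) x)) /\ (d (d x z) y = (1%:R) *: (d (d z y) x)) /\ (d x (c z y) = (1%:R) *: (d (c z y) x)) /\ (d (c x z) y = ((1%:R / 2%:R)) *: (d z (c y x)) + (-1%:R) *: (d (c z y) x) + (3%:R) *: (c z (d y x)) + (-(3%:R / 2%:R)) *: (c (d z y) x)) /\ (c x (d z y) = ((1%:R / 2%:R)) *: (d z (c y x)) + (-1%:R) *: (d (c z y) x) + (2%:R) *: (c z (d y x)) + (-(1%:R / 2%:R)) *: (c (d z y) x)) /\ (c (d x z) y = (-1%:R) *: (d (c z y) x) + (2%:R) *: (c z (d y x))) /\ (c x (c z y) = (-1%:R) *: (c (c x z) y) + (1%:R) *: (c z (c x y)) + (1%:R) *: (c (c z x) y)) /\ (d y (d x z) = (1%:R) *: (d (d z y) x)) /\ (d (d y x) z = (1%:R) *: (d (d z y) x)) /\ (d y (c x z) = ((1%:R / 2%:R)) *: (d z (c y x)) + (-1%:R) *: (d (c z y) x) + (3%:R) *: (c z (d y x)) + (-(3%:R / 2%:R)) *: (c (d z y) x)) /\ (d (c y x) z = (1%:R)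 *: (d z (c y x))) /\ (c y (d x z) = ((1%:R / 2%:R)) *: (d z (c y x)) + ((1%:R / 2%:R)) *: (c (d z y) x)) /\ (c (d y x) z = ((1%:R / 2%:R)) *: (d z (c y x)) + (-1%:R) *: (d (c z y) x) + (1%:R) *: (c z (d y x)) + ((1%:R / 2%:R)) *: (c (d z y) x)) /\ (d y (d z x) = (1%:R) *: (d (d z y) x)) /\ (d (d y z) x = (1%:R) *: (d (d z y) x)) /\ (d y (c z x) = (2%:R) *: (c z (d y x)) + (-1%:R) *: (c (d z y) x)) /\ (d (c y z) x = ((1%:R / 2%:R)) *: (d z (c y x)) + (1%:R) *: (d (c z y) x) + (-1%:R) *: (c z (d y x)) + ((1%:R / 2%:R)) *: (c (d z y) x)) /\ (c y (d z x) = ((1%:R / 2%:R)) *: (d z (c y x)) + ((1%:R / 2%:R)) *: (c (d z y) x)) /\ (c (d y z) x = (1%:R) *: (c (d z y) x)) /\ (c y (c z x) = (-1%:R) *: (c (c y z) x) + (1%:R) *: (c z (c y x)) + (1%:R) *: (c (c z y) x)) /\ (d z (d x y) = (1%:R) *: (d (d z y) x)) /\ (d (d z x) y = (1%:R) *: (d (d z y) x)) /\ (d z (c x y) = (1%:R) *: (d z (c y x)) + (-1%:R) *: (d (c z y) x) + (2%:R) *: (c z (d y x)) + (-1%:R) *: (c (d z y) x)) /\ (d (c z x) y = (2%:R) *: (c z (d y x)) + (-1%:R) *: (c (d z y) x)) /\ (c z (d x y) = (1%:R) *: (c z (d y x))) /\ (c (d z x) y = (-1%:R) *: (d (c z y)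 x) + (2%:R) *: (c z (d y x))) /\ (d z (d y x) = (1%:R) *: (d (d z y) x)).
Proof.
split; first exact: nf0 x y z.
split; first exact: nf1 x y z.
split; first exact: nf2 x y z.
split; first exact: nf3 x y z.
split; first exact: nf4 x y z.
split; first exact: nf5 x y z.
split; first exact: nf6 x y z.
split; first exact: nf7 x y z.
split; first exact: nf8 x y z.
split; first exact: nf9 x y z.
split; first exact: nf10 x y z.
split; first exact: nf11 x y z.
split; first exact: nf12 x y z.
split; first exact: nf13 x y z.
split; first exact: nf14 x y z.
split; first exact: nf15 x y z.
split; first exact: nf16 x y z.
split; first exact: nf17 x y z.
split; first exact: nf18 x y z.
split; first exact: nf19 x y z.
split; first exact: nf20 x y z.
split; first exact: nf21 x y z.
split; first exact: nf22 x y z.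
split; first exact: nf23 x y z.
split; first exact: nf24 x y z.
split; first exact: nf25 x y z.
split; first exact: nf26 x y z.
split; first exact: nf27 x y z.
split; first exact: nf28 x y z.
split; first exact: nf29 x y z.
split; first exact: nf30 x y z.
split; first exact: nf31 x y z.
split; first exact: nf32 x y z.
split; first exact: nf33 x y z.
exact: nf34 x y z.
Qed.
End APLP.

Lemma bilin_add (F : fieldType) (V : lmodType F) (op op' : V -> V -> V) :
  bilinear_op op -> bilinear_op op' -> bilinear_op (fun x y => op x y + op' x y).
Proof.
move=> h h'; split => a x y z.
  by rewrite h.1 h'.1 scalerDr addrACA.
by rewrite h.2 h'.2 scalerDr addrACA.
Qed.

Section Tens.
Variable F : fieldType.
Variables n m : nat.
Local Notation M := 'M[F]_(n, m).

Lemma tensE (x : 'rV[F]_n) (y : 'rV[F]_m) i j : tens x y i j = x 0 i * y 0 j.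
Proof. by rewrite /tens !mxE big_ord1 !mxE. Qed.

Lemma tens_delta i k : tens (delta_mx 0 i) (delta_mx 0 k) = delta_mx i k :> M.
Proof.
apply/matrixP => p q; rewrite tensE !mxE eqxx /=.
by case: (p == i); case: (q == k); rewrite /= ?mulr1 ?mulr0 ?mul0r.
Qed.

Lemma tensor_op_bilin op1 op2 : bilinear_op (@tensor_op F n m op1 op2).
Proof.
split => a T T' S.
  rewrite /tensor_op scaler_sumr -big_split /=; apply: eq_bigr => i _.
  rewrite scaler_sumr -big_split /=; apply: eq_bigr => k _.
  rewrite scaler_sumr -big_split /=; apply: eq_bigr => j _.
  rewrite scaler_sumr -big_split /=; apply: eq_bigr => l _.
  by rewrite !mxE scalerA -scalerDl mulrDl mulrA.
rewrite /tensor_op scaler_sumr -big_split /=; apply: eq_bigr => i _.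
rewrite scaler_sumr -big_split /=; apply: eq_bigr => k _.
rewrite scaler_sumr -big_split /=; apply: eq_bigr => j _.
rewrite scaler_sumr -big_split /=; apply: eq_bigr => l _.
by rewrite !mxE scalerA -scalerDl mulrDr mulrCA.
Qed.

Lemma op_expandE p (op : 'rV[F]_p -> 'rV[F]_p -> 'rV[F]_p) (hop : bilinear_op op) x y q :
  op x y 0 q = \sum_(i < p) \sum_(j < p) x 0 i * y 0 j * op (delta_mx 0 i) (delta_mx 0 j) 0 q.
Proof.
rewrite {1}(row_sum_delta x) (op_suml hop) summxE; apply: eq_bigr => i _.
rewrite (opZl hop) {1}(row_sum_delta y) (op_sumr hop) scaler_sumr summxE.
apply: eq_bigr => j _.
by rewrite (opZr hop) scalerA !mxE.
Qed.

Lemma tensor_opE op1 op2 (T S : M) p q :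
  tensor_op op1 op2 T S p q = \sum_(i < n) \sum_(k < m) \sum_(j < n) \sum_(l < m)
     T i k * S j l * (op1 (basis_vec F i) (basis_vec F j) 0 p * op2 (basis_vec F k) (basis_vec F l) 0 q).
Proof.
rewrite /tensor_op summxE; apply: eq_bigr => i _.
rewrite summxE; apply: eq_bigr => k _.
rewrite summxE; apply: eq_bigr => j _.
rewrite summxE; apply: eq_bigr => l _.
by rewrite mxE tensE mulrA.
Qed.

Lemma tensor_op_tens op1 op2 (h1 : bilinear_op op1) (h2 : bilinear_op op2) x1 x2 y1 y2 :
  tensor_op op1 op2 (tens x1 x2) (tens y1 y2) = tens (op1 x1 y1) (op2 x2 y2) :> M.
Proof.
apply/matrixP => p q.
rewrite tensor_opE tensE (op_expandE h1) (op_expandE h2).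
rewrite mulr_suml; apply: eq_bigr => i _.
rewrite exchange_big /= mulr_suml; apply: eq_bigr => j _.
rewrite mulr_sumr; apply: eq_bigr => k _.
rewrite mulr_sumr; apply: eq_bigr => l _.
rewrite !tensE /basis_vec; ring.
Qed.

Definition lin (f : M -> M) := forall a x y, f (a *: x + y) = a *: f x + f y.

Lemma ext1 f : lin f -> (forall x y, f (tens x y) = 0) -> forall T, f T = 0.
Proof.
move=> hf h0 T.
have f0 : f 0 = 0.
  have := hf 1 0 0; rewrite scaler0 addr0 scale1r => h.
  by apply: (addrI (f 0)); rewrite addr0 -h.
have fD : forall x y, f (x + y) = f x + f y.
  by move=> x y; have := hf 1 x y; rewrite !scale1r.
rewrite (matrix_sum_delta T) (big_morph f fD f0) big1 // => i _.
rewrite (big_morph f fD f0) big1 // => k _.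
have := hf (T i k) (delta_mx i k) 0; rewrite addr0 f0 addr0 => ->.
by rewrite -tens_delta h0 scaler0.
Qed.

Lemma ext2 (Phi : M -> M -> M) :
  (forall y, lin (fun x => Phi x y)) -> (forall x, lin (Phi x)) ->
  (forall x1 x2 y1 y2, Phi (tens x1 x2) (tens y1 y2) = 0) -> forall x y, Phi x y = 0.
Proof.
move=> h1 h2 h0 x y.
apply: (ext1 (f := fun x => Phi x y)) => // x1 x2.
exact: (ext1 (f := Phi (tens x1 x2))).
Qed.

Lemma ext3 (Phi : M -> M -> M -> M) :
  (forall y z, lin (fun x => Phi x y z)) -> (forall x z, lin (fun y => Phi x y z)) ->
  (forall x y, lin (Phi x y)) ->
  (forall x1 x2 y1 y2 z1 z2, Phi (tens x1 x2) (tens y1 y2) (tens z1 z2) = 0) ->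
  forall x y z, Phi x y z = 0.
Proof.
move=> h1 h2 h3 h0 x y z.
apply: (ext1 (f := fun x => Phi x y z)) => // x1 x2.
apply: (ext1 (f := fun y => Phi (tens x1 x2) y z)) => // y1 y2.
exact: (ext1 (f := Phi (tens x1 x2) (tens y1 y2))).
Qed.

Section Lin.
Variables D C : M -> M -> M.
Hypothesis hD : bilinear_op D.
Hypothesis hC : bilinear_op C.

Lemma opNl (op : M -> M -> M) (h : bilinear_op op) x z : op (- x) z = - op x z.
Proof. by rewrite -scaleN1r (opZl h) scaleN1r. Qed.
Lemma opNr (op : M -> M -> M) (h : bilinear_op op) x z : op z (- x) = - op z x.
Proof. by rewrite -scaleN1r (opZr h) scaleN1r. Qed.

Ltac linsolve := move=> a u v /=; rewrite /commut;
  rewrite ?(opDl hC, opDr hC, opZl hC, opZr hC, opNl hC, opNr hC,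
            opDl hD, opDr hD, opZl hD, opZr hD, opNl hD, opNr hD);
  apply/matrixP => i j; rewrite !mxE; ring.

Lemma lin_comm1 y : lin (fun x => D x y - D y x). Proof. linsolve. Qed.
Lemma lin_comm2 x : lin (fun y => D x y - D y x). Proof. linsolve. Qed.
Lemma lin_as1 y z : lin (fun x => D x (D y z) - D (D x y) z). Proof. linsolve. Qed.
Lemma lin_as2 x z : lin (fun y => D x (D y z) - D (D x y) z). Proof. linsolve. Qed.
Lemma lin_as3 x y : lin (fun z => D x (D y z) - D (D x y) z). Proof. linsolve. Qed.
Definition phiI1 x y z := C x (C y z) - C y (C x z) - C (commut C y x) z.
Lemma lin_I1a y z : lin (fun x => phiI1 x y z). Proof. rewrite /phiI1; linsolve. Qed.
Lemma lin_I1b x z : lin (fun y => phiI1 x y z). Proof. rewrite /phiI1; linsolve. Qed.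
Lemma lin_I1c x y : lin (phiI1 x y). Proof. rewrite /phiI1; linsolve. Qed.
Definition phiI2 x y z := C (commut C x y) z + C (commut C y z) x + C (commut C z x) y.
Lemma lin_I2a y z : lin (fun x => phiI2 x y z). Proof. rewrite /phiI2; linsolve. Qed.
Lemma lin_I2b x z : lin (fun y => phiI2 x y z). Proof. rewrite /phiI2; linsolve. Qed.
Lemma lin_I2c x y : lin (phiI2 x y). Proof. rewrite /phiI2; linsolve. Qed.
Definition phiP1 x y z := (2%:R *: D (C x y) z - 2%:R *: D (C y x) z) - (D y (C x z) - D x (C y z)).
Lemma lin_P1a y z : lin (fun x => phiP1 x y z). Proof. rewrite /phiP1; linsolve. Qed.
Lemma lin_P1b x z : lin (fun y => phiP1 x y z). Proof. rewrite /phiP1; linsolve. Qed.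
Lemma lin_P1c x y : lin (phiP1 x y). Proof. rewrite /phiP1; linsolve. Qed.
Definition phiP2 x y z := 2%:R *: C x (D y z) - (C (D z x) y + D z (C x y)).
Lemma lin_P2a y z : lin (fun x => phiP2 x y z). Proof. rewrite /phiP2; linsolve. Qed.
Lemma lin_P2b x z : lin (fun y => phiP2 x y z). Proof. rewrite /phiP2; linsolve. Qed.
Lemma lin_P2c x y : lin (phiP2 x y). Proof. rewrite /phiP2; linsolve. Qed.
End Lin.
End Tens.
Unset Implicit Arguments.

Lemma natr_nz' (F : fieldType) (HF : [pchar F] =i pred0) k : (k.+1%:R : F) != 0.
Proof. by rewrite ((pcharf0P F).1 HF). Qed.

Theorem theorem3p47 (F : fieldType) (HF : [pchar F] =i pred0) (n m : nat)
  (dot1 circ1 : 'rV[F]_n -> 'rV[F]_n -> 'rV[F]_n)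
  (dot2 circ2 : 'rV[F]_m -> 'rV[F]_m -> 'rV[F]_m) :
  anti_pre_Lie_Poisson dot1 circ1 ->
  anti_pre_Lie_Poisson dot2 circ2 ->
  anti_pre_Lie_Poisson (tensor_dot dot1 dot2) (tensor_circ dot1 circ1 dot2 circ2).
Proof.
move=> H1 H2.
have hd1 := H1.1.1. have hc1 := H1.2.1.1.
have hd2 := H2.1.1. have hc2 := H2.2.1.1.
set D := tensor_dot dot1 dot2.
set C := tensor_circ dot1 circ1 dot2 circ2.
have hD : bilinear_op D by exact: tensor_op_bilin.
have hC : bilinear_op C.
  by apply: bilin_add; apply: tensor_op_bilin.
have Dt : forall a b a' b', D (tens a b) (tens a' b') = tens (dot1 a a') (dot2 b b').
  by move=> a b a' b'; exact: tensor_op_tens.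
have Ct : forall a b a' b', C (tens a b) (tens a' b') =
    tens (circ1 a a') (dot2 b b') + tens (dot1 a a') (circ2 b b').
  by move=> a b a' b'; rewrite /C /tensor_circ !tensor_op_tens.
have nzF := @natr_nz' F HF.
split; [split; [exact: hD | split] | split; [split; [exact: hC | split] | split]].
- move=> x y; apply/eqP; rewrite -subr_eq0; apply/eqP; move: x y.
  apply: (ext2 (Phi := fun x y => D x y - D y x)).
  + exact: lin_comm1. + exact: lin_comm2.
  move=> x1 x2 y1 y2; by rewrite !Dt (H1.1.2.1 x1 y1) (H2.1.2.1 x2 y2) subrr.
- move=> x y z; apply/eqP; rewrite -subr_eq0; apply/eqP; move: x y z.
  apply: (ext3 (Phi := fun x y z => D x (D y z) - D (D x y) z)).
  + exact: lin_as1. + exact: lin_as2. + exact: lin_as3.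
  move=> x1 x2 y1 y2 z1 z2; by rewrite !Dt (H1.1.2.2 x1 y1 z1) (H2.1.2.2 x2 y2 z2) subrr.
- move=> x y z; apply/eqP; rewrite -subr_eq0; apply/eqP; move: x y z.
  apply: (ext3 (Phi := phiI1 C)).
  + exact: lin_I1a. + exact: lin_I1b. + exact: lin_I1c.
  move=> x1 x2 y1 y2 z1 z2; rewrite /phiI1 /commut.
  rewrite ?(opDl hC, opDr hC, opNl hC, opNr hC, opDl hD, opDr hD, opNl hD, opNr hD, Ct, Dt).
  have [[e0 [e1 [e2 [e3 [e4 [e5 [e6 [e7 [e8 [e9 [e10 [e11 [e12 [e13 [e14 [e15 [e16 [e17 [e18 [e19 [e20 [e21 [e22 [e23 [e24 [e25 [e26 [e27 [e28 [e29 [e30 [e31 [e32 [e33 e34]]]]]]]]]]]]]]]]]]]]]]]]]]]]]]]]]]] := @nf_all _ HF _ _ _ H1 x1 y1 z1.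
  have [[f0 [f1 [f2 [f3 [f4 [f5 [f6 [f7 [f8 [f9 [f10 [f11 [f12 [f13 [f14 [f15 [f16 [f17 [f18 [f19 [f20 [f21 [f22 [f23 [f24 [f25 [f26 [f27 [f28 [f29 [f30 [f31 [f32 [f33 f34]]]]]]]]]]]]]]]]]]]]]]]]]]]]]]]]]]] := @nf_all _ HF _ _ _ H2 x2 y2 z2.
  rewrite ?e0 ?e1 ?e2 ?e3 ?e4 ?e5 ?e6 ?e7 ?e8 ?e9 ?e10 ?e11 ?e12 ?e13 ?e14 ?e15 ?e16 ?e17 ?e18 ?e19 ?e20 ?e21 ?e22 ?e23 ?e24 ?e25 ?e26 ?e27 ?e28 ?e29 ?e30 ?e31 ?e32 ?e33 ?e34 .
  rewrite ?f0 ?f1 ?f2 ?f3 ?f4 ?f5 ?f6 ?f7 ?f8 ?f9 ?f10 ?f11 ?f12 ?f13 ?f14 ?f15 ?f16 ?f17 ?f18 ?f19 ?f20 ?f21 ?f22 ?f23 ?f24 ?f25 ?f26 ?f27 ?f28 ?f29 ?f30 ?f31 ?f32 ?f33 ?f34 .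
  apply/matrixP => i j; rewrite !mxE ?big_ord1 ?tensE !mxE.
  field; try done; repeat (apply/andP; split); try done; apply: nzF.
- apply: (ext3 (Phi := phiI2 C)).
  + exact: lin_I2a. + exact: lin_I2b. + exact: lin_I2c.
  move=> x1 x2 y1 y2 z1 z2; rewrite /phiI2 /commut.
  rewrite ?(opDl hC, opDr hC, opNl hC, opNr hC, opDl hD, opDr hD, opNl hD, opNr hD, Ct, Dt).
  have [[e0 [e1 [e2 [e3 [e4 [e5 [e6 [e7 [e8 [e9 [e10 [e11 [e12 [e13 [e14 [e15 [e16 [e17 [e18 [e19 [e20 [e21 [e22 [e23 [e24 [e25 [e26 [e27 [e28 [e29 [e30 [e31 [e32 [e33 e34]]]]]]]]]]]]]]]]]]]]]]]]]]]]]]]]]]] := @nf_all _ HF _ _ _ H1 x1 y1 z1.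
  have [[f0 [f1 [f2 [f3 [f4 [f5 [f6 [f7 [f8 [f9 [f10 [f11 [f12 [f13 [f14 [f15 [f16 [f17 [f18 [f19 [f20 [f21 [f22 [f23 [f24 [f25 [f26 [f27 [f28 [f29 [f30 [f31 [f32 [f33 f34]]]]]]]]]]]]]]]]]]]]]]]]]]]]]]]]]]] := @nf_all _ HF _ _ _ H2 x2 y2 z2.
  rewrite ?e0 ?e1 ?e2 ?e3 ?e4 ?e5 ?e6 ?e7 ?e8 ?e9 ?e10 ?e11 ?e12 ?e13 ?e14 ?e15 ?e16 ?e17 ?e18 ?e19 ?e20 ?e21 ?e22 ?e23 ?e24 ?e25 ?e26 ?e27 ?e28 ?e29 ?e30 ?e31 ?e32 ?e33 ?e34 .
  rewrite ?f0 ?f1 ?f2 ?f3 ?f4 ?f5 ?f6 ?f7 ?f8 ?f9 ?f10 ?f11 ?f12 ?f13 ?f14 ?f15 ?f16 ?f17 ?f18 ?f19 ?f20 ?f21 ?f22 ?f23 ?f24 ?f25 ?f26 ?f27 ?f28 ?f29 ?f30 ?f31 ?f32 ?f33 ?f34 .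
  apply/matrixP => i j; rewrite !mxE ?big_ord1 ?tensE !mxE.
  field; try done; repeat (apply/andP; split); try done; apply: nzF.
- move=> x y z; apply/eqP; rewrite -subr_eq0; apply/eqP; move: x y z.
  apply: (ext3 (Phi := phiP1 D C)).
  + exact: lin_P1a. + exact: lin_P1b. + exact: lin_P1c.
  move=> x1 x2 y1 y2 z1 z2; rewrite /phiP1.
  rewrite ?(opDl hC, opDr hC, opNl hC, opNr hC, opDl hD, opDr hD, opNl hD, opNr hD, Ct, Dt).
  have [[e0 [e1 [e2 [e3 [e4 [e5 [e6 [e7 [e8 [e9 [e10 [e11 [e12 [e13 [e14 [e15 [e16 [e17 [e18 [e19 [e20 [e21 [e22 [e23 [e24 [e25 [e26 [e27 [e28 [e29 [e30 [e31 [e32 [e33 e34]]]]]]]]]]]]]]]]]]]]]]]]]]]]]]]]]]] := @nf_all _ HF _ _ _ H1 x1 y1 z1.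
  have [[f0 [f1 [f2 [f3 [f4 [f5 [f6 [f7 [f8 [f9 [f10 [f11 [f12 [f13 [f14 [f15 [f16 [f17 [f18 [f19 [f20 [f21 [f22 [f23 [f24 [f25 [f26 [f27 [f28 [f29 [f30 [f31 [f32 [f33 f34]]]]]]]]]]]]]]]]]]]]]]]]]]]]]]]]]]] := @nf_all _ HF _ _ _ H2 x2 y2 z2.
  rewrite ?e0 ?e1 ?e2 ?e3 ?e4 ?e5 ?e6 ?e7 ?e8 ?e9 ?e10 ?e11 ?e12 ?e13 ?e14 ?e15 ?e16 ?e17 ?e18 ?e19 ?e20 ?e21 ?e22 ?e23 ?e24 ?e25 ?e26 ?e27 ?e28 ?e29 ?e30 ?e31 ?e32 ?e33 ?e34 .
  rewrite ?f0 ?f1 ?f2 ?f3 ?f4 ?f5 ?f6 ?f7 ?f8 ?f9 ?f10 ?f11 ?f12 ?f13 ?f14 ?f15 ?f16 ?f17 ?f18 ?f19 ?f20 ?f21 ?f22 ?f23 ?f24 ?f25 ?f26 ?f27 ?f28 ?f29 ?f30 ?f31 ?f32 ?f33 ?f34 .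
  apply/matrixP => i j; rewrite !mxE ?big_ord1 ?tensE !mxE.
  field; try done; repeat (apply/andP; split); try done; apply: nzF.
- move=> x y z; apply/eqP; rewrite -subr_eq0; apply/eqP; move: x y z.
  apply: (ext3 (Phi := phiP2 D C)).
  + exact: lin_P2a. + exact: lin_P2b. + exact: lin_P2c.
  move=> x1 x2 y1 y2 z1 z2; rewrite /phiP2.
  rewrite ?(opDl hC, opDr hC, opNl hC, opNr hC, opDl hD, opDr hD, opNl hD, opNr hD, Ct, Dt).
  have [[e0 [e1 [e2 [e3 [e4 [e5 [e6 [e7 [e8 [e9 [e10 [e11 [e12 [e13 [e14 [e15 [e16 [e17 [e18 [e19 [e20 [e21 [e22 [e23 [e24 [e25 [e26 [e27 [e28 [e29 [e30 [e31 [e32 [e33 e34]]]]]]]]]]]]]]]]]]]]]]]]]]]]]]]]]]] := @nf_all _ HF _ _ _ H1 x1 y1 z1.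
  have [[f0 [f1 [f2 [f3 [f4 [f5 [f6 [f7 [f8 [f9 [f10 [f11 [f12 [f13 [f14 [f15 [f16 [f17 [f18 [f19 [f20 [f21 [f22 [f23 [f24 [f25 [f26 [f27 [f28 [f29 [f30 [f31 [f32 [f33 f34]]]]]]]]]]]]]]]]]]]]]]]]]]]]]]]]]]] := @nf_all _ HF _ _ _ H2 x2 y2 z2.
  rewrite ?e0 ?e1 ?e2 ?e3 ?e4 ?e5 ?e6 ?e7 ?e8 ?e9 ?e10 ?e11 ?e12 ?e13 ?e14 ?e15 ?e16 ?e17 ?e18 ?e19 ?e20 ?e21 ?e22 ?e23 ?e24 ?e25 ?e26 ?e27 ?e28 ?e29 ?e30 ?e31 ?e32 ?e33 ?e34 .
  rewrite ?f0 ?f1 ?f2 ?f3 ?f4 ?f5 ?f6 ?f7 ?f8 ?f9 ?f10 ?f11 ?f12 ?f13 ?f14 ?f15 ?f16 ?f17 ?f18 ?f19 ?f20 ?f21 ?f22 ?f23 ?f24 ?f25 ?f26 ?f27 ?f28 ?f29 ?f30 ?f31 ?f32 ?f33 ?f34 .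
  apply/matrixP => i j; rewrite !mxE ?big_ord1 ?tensE !mxE.
  field; try done; repeat (apply/andP; split); try done; apply: nzF.
Qed.
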